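(* There exists an explicit family of triangle-free graphs on $n$ vertices (with $n$ arbitrarily large) where $\overline{\chi}_f\ge n/2$ whereas the broadcast rate satisfies $\beta\le\frac38 n$.
   Context: For an undirected graph $G$ on vertex set $[n]$, consider the index coding problem: a server holds messages $x_1,\dots,x_n\in\Sigma$ ($|\Sigma|>1$), receiver $i$ wants $x_i$ and knows $x_j$ for every neighbor $j$ of $i$. A solution is an encoding $\mathcal{E}:\Sigma^n\to\Sigma_P$ from which each receiver can recover its message given its side information, for all message values. $\beta_t(G)$ is the minimum of $\lceil\log_2|\Sigma_P|\rceil$ over solutions with $|\Sigma|=2^t$, and the broadcast rate is $\beta(G)=\lim_t\beta_t(G)/t=\inf_t\beta_t(G)/t$. $\overline{\chi}_f(G)$ is the fractional clique-cover number: the minimum total weight of a nonnegative weighting of cliques of $G$ covering each vertex with total weight at least $1$. *)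

(* Defs.v *)
From HB Require Import structures.
From mathcomp Require Import all_boot all_order all_algebra.
From mathcomp Require Import classical_sets reals.
From mathcomp Require Import Rstruct.
From Stdlib Require Rdefinitions.
Notation R := Rdefinitions.R.
Set Implicit Arguments. Unset Strict Implicit. Unset Printing Implicit Defensive.
Import Order.TTheory GRing.Theory Num.Theory.
Local Open Scope ring_scope.
Local Open Scope classical_set_scope.

Definition simple_graph (n : nat) (e : rel 'I_n) : Prop :=
  symmetric e /\ irreflexive e.

Definition triangle_free (n : nat) (e : rel 'I_n) : Prop :=
  forall i j k : 'I_n, ~ [&& e i j, e j k & e i k].

Definition is_clique (n : nat) (e : rel 'I_n) (S : {set 'I_n}) : bool :=
  [forall i in S, forall j in S, (i != j) ==> e i j].

Definition frac_clique_cover (n : nat) (e : rel 'I_n) (w : {set 'I_n} -> R) : Prop :=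
  (forall S, 0 <= w S) /\
  (forall S, ~~ is_clique e S -> w S = 0) /\
  (forall v : 'I_n, 1 <= \sum_(S : {set 'I_n} | is_clique e S && (v \in S)) w S).

Definition frac_clique_cover_number (n : nat) (e : rel 'I_n) : R :=
  inf [set \sum_(S : {set 'I_n} | is_clique e S) w S | w in frac_clique_cover e].

(* Messages over the alphabet Sigma = 'I_(2^t) (|Sigma| = 2^t); the encoding takes
   values in a set Sigma_P of size k, represented as 'I_k.  E is a solution if every
   receiver i has a decoder which, from the broadcast E x and its side information
   (the values x_j for neighbours j of i -- i.e. the decoder's dependence on x is only
   through these coordinates), recovers x_i, for all message values x. *)
Definition ic_solution (n : nat) (e : rel 'I_n) (t k : nat)
    (E : {ffun 'I_n -> 'I_(2 ^ t)} -> 'I_k) : Prop :=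
  exists D : 'I_n -> 'I_k -> {ffun 'I_n -> 'I_(2 ^ t)} -> 'I_(2 ^ t),
    (forall i c (x y : {ffun 'I_n -> 'I_(2 ^ t)}),
        (forall j, e i j -> x j = y j) -> D i c x = D i c y) /\
    (forall i (x : {ffun 'I_n -> 'I_(2 ^ t)}), D i (E x) x = x i).

Definition beta_t (n : nat) (e : rel 'I_n) (t : nat) : R :=
  inf [set ((up_log 2 k)%:R : R) | k in
        [set k : nat | exists E : {ffun 'I_n -> 'I_(2 ^ t)} -> 'I_k, ic_solution e E]].

(* broadcast rate beta(G) = inf_{t >= 1} beta_t(G)/t  (|Sigma| = 2^t > 1 forces t >= 1) *)
Definition broadcast_rate (n : nat) (e : rel 'I_n) : R :=
  inf [set beta_t e t / (t%:R : R) | t in [set t : nat | (0 < t)%N]].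

(* Main.v *)
Require Import Defs.
From mathcomp Require Import all_boot all_order all_algebra.
From mathcomp Require Import classical_sets boolp reals Rstruct.
From mathcomp Require Import lra.
Import Order.TTheory GRing.Theory Num.Theory.
Local Open Scope ring_scope.

Set Implicit Arguments. Unset Strict Implicit. Unset Printing Implicit Defensive.

Section FCC.
Variables (n : nat) (e : rel 'I_n).

Lemma clique_card2 (S : {set 'I_n}) :
  triangle_free e -> is_clique e S -> (#|S| <= 2)%N.
Proof.
move=> tf /forallP cl; rewrite leqNgt; apply/negP => /card_gt2P [x [y [z]]].
move=> [[xS yS zS] [xy yz zx]].
have E u v : u \in S -> v \in S -> u != v -> e u v.
  by move=> uS vS uv; move: (cl u); rewrite uS /= => /forallP /(_ v); rewrite vS uv.
apply: (tf x y z); rewrite E //= E //= E // eq_sym //.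
Qed.

Lemma fcc_lb : triangle_free e -> (n%:R / 2 : R) <= frac_clique_cover_number e.
Proof.
move=> tf; apply: lb_le_inf.
  pose w (S : {set 'I_n}) : R := if [exists v, S == [set v]] then 1 else 0.
  have clw v : is_clique e [set v].
    apply/forallP => i; apply/implyP => /set1P ->; apply/forallP => j.
    by apply/implyP => /set1P ->; rewrite eqxx.
  exists (\sum_(S : {set 'I_n} | is_clique e S) w S), w => //.
  split; [|split].
  - by move=> S; rewrite /w; case: ifP.
  - move=> S ncl; rewrite /w; case: ifP => // /existsP [v /eqP SE].
    by rewrite SE clw in ncl.
  - move=> v; rewrite (bigD1 [set v]) /=; last by rewrite clw set11.
    rewrite {1}/w; have -> : [exists v0, [set v] == [set v0]] by apply/existsP; exists v.
    rewrite lerDl sumr_ge0 // => S _; rewrite /w; case: ifP => //.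
move=> _ [w [w0 [wc wv]] <-].
have H1 : (n%:R : R) <= \sum_(S : {set 'I_n} | is_clique e S) (#|S|%:R * w S).
  have -> : (n%:R : R) = \sum_(v : 'I_n) 1.
    by rewrite sumr_const card_ord.
  apply: (le_trans (ler_sum _ (fun v _ => wv v))).
  rewrite (eq_bigr (fun v => \sum_(S : {set 'I_n}) (if is_clique e S && (v \in S) then w S else 0))); last first.
    by move=> v _; rewrite big_mkcond.
  rewrite exchange_big /= [in X in _ <= X]big_mkcond /=; apply: ler_sum => S _.
  case: (boolP (is_clique e S)) => cS /=; last first.
    by rewrite big1.
  rewrite -big_mkcond /= sumr_const mulr_natl.
  by rewrite (eq_card (fun x => erefl)).
have H2 : \sum_(S : {set 'I_n} | is_clique e S) (#|S|%:R * w S)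
     <= \sum_(S : {set 'I_n} | is_clique e S) (2 * w S).
  apply: ler_sum => S cS; apply: ler_wpM2r => //.
  by rewrite ler_nat; exact: clique_card2.
rewrite -mulr_sumr in H2.
have H := le_trans H1 H2.
rewrite ler_pdivrMr //; by rewrite mulrC.
Qed.
End FCC.

Definition Ul := [:: 1;2;4;8;16;28;26;25;32;44;42;41;62;61;59;55]%N.
Definition Vl := [:: 1;2;4;56;24;36;34;33;40;20;18;17;14;13;11;55]%N.
Definition bit (a k : nat) := odd (a %/ 2^k).
Definition dist (a b : nat) := count (fun k => bit a k != bit b k) (iota 0 4).
Definition adj16 (a b : nat) := (3 <= dist a b)%N.

Lemma tri_nat : all (fun a => all (fun b => all (fun c =>
   ~~ [&& adj16 a b, adj16 b c & adj16 a c]) (iota 0 16)) (iota 0 16)) (iota 0 16).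
Proof. by vm_compute. Qed.

Lemma M_nat : all (fun a => all (fun b =>
  odd (count (fun k => bit (nth 0%N Ul a) k && bit (nth 0%N Vl b) k) (iota 0 6))
    == (a == b) || adj16 a b) (iota 0 16)) (iota 0 16).
Proof. by vm_compute. Qed.

Lemma adj16C a b : adj16 a b = adj16 b a.
Proof. by rewrite /adj16 /dist; congr (_ <= _)%N; apply: eq_count => k; rewrite eq_sym. Qed.

Lemma adj16xx a : adj16 a a = false.
Proof.
rewrite /adj16 /dist; under eq_count => k do rewrite eqxx.
by rewrite count_pred0.
Qed.

Lemma tri16 (a b c : 'I_16) : ~~ [&& adj16 a b, adj16 b c & adj16 a c].
Proof.
move/allP: tri_nat => /(_ a); rewrite mem_iota ltn_ord => /(_ isT) /allP /(_ b).
rewrite mem_iota ltn_ord => /(_ isT) /allP /(_ c); rewrite mem_iota ltn_ord.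
by move=> /(_ isT).
Qed.

Lemma M16 (a b : 'I_16) :
  odd (count (fun k => bit (nth 0%N Ul a) k && bit (nth 0%N Vl b) k) (iota 0 6))
    = (a == b) || adj16 a b.
Proof.
move/allP: M_nat => /(_ a); rewrite mem_iota ltn_ord => /(_ isT) /allP /(_ b).
by rewrite mem_iota ltn_ord => /(_ isT) /eqP.
Qed.

Section Blocks.
Variable m : nat.
Local Notation n := (m * 16)%N.

Lemma blk_proof (i : 'I_n) : (i %/ 16 < m)%N.
Proof. by rewrite ltn_divLR. Qed.
Definition blk (i : 'I_n) : 'I_m := Ordinal (blk_proof i).
Definition loc (i : 'I_n) : 'I_16 := Ordinal (@ltn_pmod i 16 isT).
Lemma vtx_proof (b : 'I_m) (l : 'I_16) : (b * 16 + l < n)%N.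
Proof.
apply: (@leq_trans (b.+1 * 16)); first by rewrite mulSn addnC ltn_add2r.
by rewrite leq_mul2r ltn_ord orbT.
Qed.
Definition vtx (b : 'I_m) (l : 'I_16) : 'I_n := Ordinal (vtx_proof b l).

Lemma blk_vtx b l : blk (vtx b l) = b.
Proof. by apply: val_inj => /=; rewrite divnMDl // divn_small // addn0. Qed.
Lemma loc_vtx b l : loc (vtx b l) = l.
Proof. by apply: val_inj => /=; rewrite modnMDl modn_small. Qed.
Lemma vtx_blk_loc i : vtx (blk i) (loc i) = i.
Proof. by apply: val_inj => /=; rewrite -divn_eq. Qed.

Definition eB : rel 'I_n := fun i j => (blk i == blk j) && adj16 (loc i) (loc j).

Lemma eB_simple : simple_graph eB.
Proof.
split.
- by move=> i j; rewrite /eB eq_sym adj16C.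
- by move=> i; rewrite /eB adj16xx andbF.
Qed.

Lemma eB_tf : triangle_free eB.
Proof.
move=> i j k /and3P [/andP [_ h1] /andP [_ h2] /andP [_ h3]].
by move: (tri16 (loc i) (loc j) (loc k)); rewrite h1 h2 h3.
Qed.

Definition Ub (l : 'I_16) (k : 'I_6) : 'Z_2 := (bit (nth 0%N Ul l) k)%:R.
Definition Vb (l : 'I_16) (k : 'I_6) : 'Z_2 := (bit (nth 0%N Vl l) k)%:R.
Definition Cw := {ffun 'I_m -> {ffun 'I_6 -> 'Z_2}}.
Definition msg := {ffun 'I_n -> 'I_(2 ^ 1)}.
Definition xz (x : msg) (j : 'I_n) : 'Z_2 := x j.
Definition code (x : msg) : Cw :=
  [ffun b => [ffun k => \sum_(l < 16) xz x (vtx b l) * Vb l k]].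
Definition Enc (x : msg) : 'I_#|{: Cw}| := enum_rank (code x).
Definition nbsum (i : 'I_n) (x : msg) : 'Z_2 :=
  \sum_(l : 'I_16 | adj16 (loc i) l) xz x (vtx (blk i) l).
Definition Dec (i : 'I_n) (c : 'I_#|{: Cw}|) (x : msg) : 'I_(2 ^ 1) :=
  let y := enum_val c in
  ((\sum_(k < 6) Ub (loc i) k * y (blk i) k) - nbsum i x : 'Z_2).

Lemma Zp2_nat (a : nat) : (a%:R : 'Z_2) = (odd a)%:R.
Proof. by rewrite -[LHS](@Zp_nat_mod 2 isT) modn2. Qed.

Lemma UV_dot (l l' : 'I_16) :
  \sum_(k < 6) Ub l k * Vb l' k = ((l == l') || adj16 l l')%:R.
Proof.
rewrite -M16 -Zp2_nat.
have -> : \sum_(k < 6) Ub l k * Vb l' k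
   = \sum_(k < 6) (nat_of_bool (bit (nth 0%N Ul l) k && bit (nth 0%N Vl l') k))%:R.
  by apply: eq_bigr => k _; rewrite /Ub /Vb -natrM; case: (bit _ _); case: (bit _ _).
rewrite -natr_sum; congr (_%:R).
rewrite -(big_mkord xpredT (fun k => nat_of_bool (bit (nth 0%N Ul l) k && bit (nth 0%N Vl l') k))).
rewrite -sum1_count [RHS]big_mkcond /index_iota subn0; apply: eq_bigr => k _; by case: (_ && _).
Qed.

Lemma dec_ok : ic_solution eB Enc.
Proof.
exists Dec; split.
- move=> i c x y H; rewrite /Dec /nbsum; congr (_ - _ : 'Z_2).
  apply: eq_bigr => l al; rewrite /xz H //.
  by rewrite /eB blk_vtx loc_vtx eqxx al.
- move=> i x; rewrite /Dec /Enc enum_rankK /code.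
  set b := blk i; set l := loc i.
  have -> : \sum_(k < 6) Ub l k * [ffun b0 => [ffun k0 => \sum_(l0 < 16) xz x (vtx b0 l0) * Vb l0 k0]] b k
       = \sum_(l0 < 16) xz x (vtx b l0) * ((l == l0) || adj16 l l0)%:R.
    under eq_bigr => k _ do rewrite !ffunE mulr_sumr.
    rewrite exchange_big /=; apply: eq_bigr => l0 _.
    rewrite -UV_dot mulr_sumr; apply: eq_bigr => k _; rewrite mulrCA.
    by rewrite mulrC.
  have -> : \sum_(l0 < 16) xz x (vtx b l0) * ((l == l0) || adj16 l l0)%:R
       = \sum_(l0 < 16) (xz x (vtx b l0) * (l == l0)%:R + xz x (vtx b l0) * (adj16 l l0)%:R).
    apply: eq_bigr => l0 _; rewrite -mulrDr; congr (_ * _).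
    case: eqP => [<-|_]; first by rewrite adj16xx addr0.
    by rewrite add0r.
  rewrite big_split /= (bigD1 l) //= eqxx mulr1 big1 ?addr0; last first.
    by move=> l0 /negPf; rewrite eq_sym => ->; rewrite mulr0.
  rewrite [X in _ + X - _](_ : _ = nbsum i x) ?addrK; first by rewrite /xz /b /l vtx_blk_loc.
  rewrite /nbsum [RHS]big_mkcond /b /l; apply: eq_bigr => l0 _.
  by case: (adj16 _ _); rewrite ?mulr1 ?mulr0.
Qed.

End Blocks.

Lemma inf_ge0 (E : set R) : (forall x, E x -> 0 <= x) -> 0 <= inf E.
Proof.
move=> H; case: (pselect (has_inf E)) => [[ne _]|nh].
- by apply: lb_le_inf.
- by rewrite inf_out.
Qed.

Lemma beta_t_ge0 n (e : rel 'I_n) t : 0 <= beta_t e t.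
Proof. by apply: inf_ge0 => x [k _ <-]. Qed.

Lemma card_Cw m : #|{: Cw m}| = (2 ^ (6 * m))%N.
Proof.
rewrite /Cw card_ffun card_ffun !card_ord.
by rewrite -expnM mulnC.
Qed.

Lemma rate_bound m : broadcast_rate (@eB m) <= (6 * m)%N%:R.
Proof.
have H1 : broadcast_rate (@eB m) <= beta_t (@eB m) 1 / (1%N)%:R.
  apply: ge_inf; last by exists 1%N.
  exists 0 => x [t t0 <-]; apply: divr_ge0; first exact: beta_t_ge0.
  exact: ler0n.
rewrite divr1 in H1; apply: (le_trans H1).
have H2 : beta_t (@eB m) 1 <= (up_log 2 #|{: Cw m}|)%:R.
  apply: ge_inf; last by exists #|{: Cw m}| => //; exists (@Enc m); exact: (@dec_ok m).
  by exists 0 => x [k _ <-]; exact: ler0n.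
apply: (le_trans H2); rewrite ler_nat card_Cw.
by apply: up_log_min.
Qed.

Theorem theorem4p1 :
  forall N : nat, exists n : nat, (N <= n)%N /\
    exists e : rel 'I_n,
      simple_graph e /\ triangle_free e /\
      (n%:R / 2 : R) <= frac_clique_cover_number e /\
      broadcast_rate e <= 3 / 8 * (n%:R : R).
Proof.
move=> N; exists (N.+1 * 16)%N; split.
  by rewrite mulnC (leq_trans (leqnSn N)) // leq_pmull.
exists (@eB N.+1); split; first exact: eB_simple.
split; first exact: eB_tf.
split; first by apply: fcc_lb; exact: eB_tf.
apply: (le_trans (rate_bound N.+1)).
rewrite !natrM.
set a : R := (N.+1)%:R.
lra.
Qed.
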